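(* Fix an integer $n\geq1$ and a polynomial $f(q)\in\mathbb{Z}[q]$. Then $f(q)\in G_n\mathbb{Z}[q]$ if and only if $f(q)\in (1+q^m)^{\lfloor n/2m\rfloor}\mathbb{Z}[q]$ for all $1\leq m\leq \lfloor n/2\rfloor$, where $$G_n=\prod_{k=1}^{\lfloor\log_2 n\rfloor}\prod_{i=1}^{\lfloor n/2^k \rfloor}(1+q^i).$$ *)

(* Defs.v *)
From mathcomp Require Import all_boot all_order all_algebra.
Set Implicit Arguments. Unset Strict Implicit. Unset Printing Implicit Defensive.
Import GRing.Theory.
Local Open Scope ring_scope.

Definition Gn (n : nat) : {poly int} :=
  \prod_(1 <= k < (trunc_log 2 n).+1) \prod_(1 <= i < (n %/ 2 ^ k)%N.+1) (1 + 'X^i).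

Definition in_ideal (g f : {poly int}) : Prop := exists h : {poly int}, f = h * g.

(* Main.v *)
Require Import Defs.
From mathcomp Require Import all_boot all_order all_algebra all_field.
From mathcomp Require Import zify ring.
From Stdlib Require Import Classical.
Set Implicit Arguments. Unset Strict Implicit. Unset Printing Implicit Defensive.
Import GRing.Theory Num.Theory.
Local Open Scope ring_scope.


Notation C := algC.
Definition phi (p : {poly int}) : {poly C} := map_poly (intr : int -> C) p.

Lemma phiM p q : phi (p * q) = phi p * phi q.
Proof. by rewrite /phi rmorphM. Qed.

Lemma phi_eq0 p : (phi p == 0) = (p == 0).
Proof.
apply/idP/idP => [|/eqP->]; last by rewrite /phi rmorph0.
rewrite -!size_poly_eq0 /phi size_map_inj_poly //; exact: intr_inj.
Qed.

Lemma phi_size p : size (phi p) = size p.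
Proof. rewrite /phi size_map_inj_poly //; exact: intr_inj. Qed.

Lemma lemA (g f : {poly int}) : g \is monic -> phi g %| phi f -> in_ideal g f.
Proof.
move=> mg dv.
have E := Pdiv.IdomainMonic.divp_eq mg f.
exists (f %/ g).
have Hr : f %% g = 0.
  apply/eqP; rewrite -phi_eq0; apply/negPn/negP => nz.
  have : phi g %| phi (f %% g).
    have -> : phi (f %% g) = phi f - phi (f %/ g) * phi g.
      by rewrite [X in _ = phi X - _]E /phi rmorphD rmorphM /= addrAC subrr add0r.
    by rewrite dvdp_sub // dvdp_mull.
  move/(dvdp_leq nz); rewrite !phi_size leqNgt ltn_modp monic_neq0 //.
by rewrite {1}E Hr addr0.
Qed.

Lemma mup_big (I : Type) (r : seq I) (P : pred I) (F : I -> {poly C}) x :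
  (forall i, P i -> F i != 0) ->
  \prod_(i <- r | P i) F i != 0 /\
  mup x (\prod_(i <- r | P i) F i) = (\sum_(i <- r | P i) mup x (F i))%N.
Proof.
move=> H.
apply: (big_ind2 (fun p s => p != 0 /\ mup x p = s)).
- by split; [exact: oner_neq0 | rewrite mupNroot ?root1].
- move=> p1 s1 p2 s2 [h1 e1] [h2 e2]; split; first exact: mulf_neq0.
  by rewrite mupM // e1 e2.
- by move=> i Pi; split => //; exact: H.
Qed.

Lemma mup_mono x (p f : {poly C}) : f != 0 -> p %| f -> (mup x p <= mup x f)%N.
Proof.
move=> fn pf; have pn : p != 0 by apply: contraNneq fn => p0; move: pf; rewrite p0 dvd0p.
by rewrite mup_geq // (dvdp_trans _ pf) // -mup_geq.
Qed.

Lemma lemB (g f : {poly C}) : g != 0 -> f != 0 ->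
  (forall x, mup x g <= mup x f)%N -> g %| f.
Proof.
move=> gn fn H.
have [r Er] := closed_field_poly_normal g.
have lc : lead_coef g != 0 by rewrite lead_coef_eq0.
rewrite Er dvdpZl //.
have {}H : forall x, (count_mem x r <= mup x f)%N.
  move=> x; apply: leq_trans (H x); rewrite -mu_prod_XsubC.
  apply: mup_mono => //; rewrite [X in _ %| X]Er dvdpZr //.
elim: r f fn H {Er} => [|a r IH] f fn H; first by rewrite big_nil dvd1p.
rewrite big_cons.
have da : 'X - a%:P %| f by rewrite XsubC_dvd // (leq_trans _ (H a)) //= eqxx.
have Ef := divpK da.
set f' := f %/ ('X - a%:P) in Ef.
have f'n : f' != 0 by apply: contraNneq fn => e; rewrite -Ef e mul0r.
rewrite -Ef mulrC dvdp_mul2r ?polyXsubC_eq0 //.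
apply: IH => // x; move: (H x); rewrite -Ef mupM ?polyXsubC_eq0 //.
have := mup_XsubCX 1 x a; rewrite expr1 => -> /=; case: (a == x) => /=; lia.
Qed.


Lemma oneX_monic (R : nzRingType) i : (0 < i)%N -> (1 + 'X^i : {poly R}) \is monic.
Proof. by move=> i0; rewrite addrC -polyC1 monicXnaddC. Qed.

Lemma mup1X (x : C) i : (0 < i)%N -> mup x (1 + 'X^i : {poly C}) = (x ^+ i == -1).
Proof.
move=> i0.
have pn : (1 + 'X^i : {poly C}) != 0 by apply: monic_neq0; exact: oneX_monic.
have rt : root (1 + 'X^i : {poly C}) x = (x ^+ i == -1).
  by rewrite /root !hornerE addrC addr_eq0.
case: eqP => xi; last by rewrite mupNroot // rt; apply/eqP.
apply/eqP; rewrite eqn_leq; apply/andP; split; last first.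
  by rewrite -XsubC_dvd // dvdp_XsubCl rt xi.
rewrite mup_leq //; apply/negP => /divpK E.
set q := _ %/ _ in E.
have : (1 + 'X^i : {poly C})^`().[x] = 0.
  rewrite -E derivM !hornerE exprS derivM derivXsubC !hornerE subrr.
  simpl; ring.
rewrite derivD derivC derivXn add0r hornerMn hornerXn => /eqP.
rewrite mulrn_eq0 (negbTE (lt0n_neq0 i0)) /= expf_eq0 => /andP [_ /eqP x0].
by move: xi; rewrite x0 expr0n (negbTE (lt0n_neq0 i0)) => /eqP; rewrite eq_sym oppr_eq0 oner_eq0.
Qed.


Lemma mupX (x : C) (p : {poly C}) N : p != 0 -> mup x (p ^+ N) = (N * mup x p)%N.
Proof.
move=> pn; elim: N => [|N IH]; first by rewrite expr0 mupNroot ?root1.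
by rewrite exprS mupM ?expf_neq0 // IH mulSn.
Qed.

Lemma one_neq_m1 : (1 : C) != -1.
Proof. by rewrite -addr_eq0 -(natrD _ 1 1) pnatr_eq0. Qed.

Lemma char_m1 (x : C) m0 : (0 < m0)%N -> x ^+ m0 = -1 ->
  (forall r, (0 < r < m0)%N -> x ^+ r != -1) ->
  forall i, (x ^+ i == -1) = (m0 %| i)%N && ~~ (2 * m0 %| i)%N.
Proof.
move=> m0p xm H i.
have Ei : (x ^+ i = (-1) ^+ odd (i %/ m0) * x ^+ (i %% m0)).
  by rewrite {1}(divn_eq i m0) exprD mulnC exprM xm signr_odd.
rewrite Ei.
case: (posnP (i %% m0)) => r0.
  have dv : (m0 %| i)%N by rewrite /dvdn r0.
  rewrite dv r0 expr0 mulr1 /=.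
  have -> : (2 * m0 %| i)%N = (2 %| i %/ m0)%N.
    by rewrite {1}(divn_eq i m0) r0 addn0 dvdn_pmul2r.
  rewrite dvdn2 negbK; case: (odd _); rewrite ?expr1 ?expr0 ?eqxx //.
  by rewrite (negbTE one_neq_m1).
have -> : (m0 %| i)%N = false by rewrite /dvdn; apply/negbTE; rewrite -lt0n.
have rlt : (i %% m0 < m0)%N by rewrite ltn_mod.
case: (odd _); rewrite ?expr1 ?expr0 ?mul1r; last first.
  by apply/negbTE/H; rewrite r0 rlt.
rewrite mulN1r eqr_opp; apply/negbTE/eqP => x1.
have : x ^+ (m0 - i %% m0) = -1.
  have e : x ^+ m0 = x ^+ (m0 - i %% m0) * x ^+ (i %% m0) by rewrite -exprD subnK // ltnW.
  by rewrite x1 mulr1 xm in e.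
by apply/eqP/H; lia.
Qed.


Lemma cnt_formula (x : C) m0 : (0 < m0)%N -> x ^+ m0 = -1 ->
  (forall r, (0 < r < m0)%N -> x ^+ r != -1) -> forall M,
  (\sum_(1 <= i < M.+1) ((x ^+ i == -1)%R : nat))%N = (M %/ m0 - M %/ (2 * m0))%N.
Proof.
move=> m0p xm H; elim=> [|M IH]; first by rewrite big_geq // div0n.
rewrite big_nat_recr //= IH (char_m1 m0p xm H) !divnS ?muln_gt0 //.
have le1 : (M %/ (2 * m0) <= M %/ m0)%N by apply: leq_div2l => //; lia.
have imp : (2 * m0 %| M.+1)%N -> (m0 %| M.+1)%N.
  by move=> h; apply: dvdn_trans h; apply: dvdn_mull.
move: imp; case: (2 * m0 %| M.+1)%N; case: (m0 %| M.+1)%N => /=; lia.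
Qed.

Lemma tele (b : nat -> nat) L : (forall k, b k.+1 <= b k)%N ->
  (\sum_(1 <= k < L.+1) (b k - b k.+1))%N = (b 1 - b L.+1)%N.
Proof.
move=> hb.
have hb1 : forall k, (b k.+1 <= b 1)%N.
  by elim=> [|k IH] //; apply: leq_trans (hb _) IH.
elim: L => [|L IH]; first by rewrite big_geq // subnn.
rewrite big_nat_recr //= IH; have := hb L.+1; have := hb1 L; lia.
Qed.


Lemma oneX_neq0 i : (1 + 'X^i : {poly C}) != 0.
Proof.
apply/negP => /eqP h; have := congr1 (fun p => p.[1]) h.
rewrite !hornerE expr1n /= => /eqP; rewrite -(natrD _ 1 1) pnatr_eq0 //.
Qed.

Lemma phi_oneX i : phi (1 + 'X^i) = 1 + 'X^i.
Proof. by rewrite /phi rmorphD rmorph1 rmorphXn /= map_polyX. Qed.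

Lemma phiG n : phi (Gn n) = \prod_(1 <= k < (trunc_log 2 n).+1)
   \prod_(1 <= i < (n %/ 2 ^ k)%N.+1) (1 + 'X^i).
Proof.
rewrite /phi /Gn rmorph_prod; apply: eq_bigr => k _.
rewrite rmorph_prod; apply: eq_bigr => i _; exact: phi_oneX.
Qed.

Lemma mupG x n : phi (Gn n) != 0 /\ mup x (phi (Gn n)) =
  (\sum_(1 <= k < (trunc_log 2 n).+1)
     \sum_(1 <= i < (n %/ 2 ^ k)%N.+1) ((x ^+ i == -1)%R : nat))%N.
Proof.
have inner : forall k : nat,
  \prod_(1 <= i < (n %/ 2 ^ k)%N.+1) (1 + 'X^i : {poly C}) != 0 /\
  mup x (\prod_(1 <= i < (n %/ 2 ^ k)%N.+1) (1 + 'X^i : {poly C})) = 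
  (\sum_(1 <= i < (n %/ 2 ^ k)%N.+1) ((x ^+ i == -1)%R : nat))%N.
  move=> k; have [h1 h2] := mup_big (index_iota 1 (n %/ 2 ^ k).+1) (P := predT) (F := fun i => 1 + 'X^i) x (fun i _ => oneX_neq0 i).
  split => //; rewrite h2; apply: eq_big_nat => i /andP [i1 _]; exact: mup1X.
rewrite phiG.
have [h1 h2] := mup_big (index_iota 1 (trunc_log 2 n).+1) (P := predT)
   (F := fun k => \prod_(1 <= i < (n %/ 2 ^ k)%N.+1) (1 + 'X^i : {poly C})) x
   (fun k _ => (inner k).1).
split => //; rewrite h2; apply: eq_bigr => k _; exact: (inner k).2.
Qed.

Lemma mupG_none x n : (forall i, (0 < i)%N -> x ^+ i != -1) -> mup x (phi (Gn n)) = 0%N.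
Proof.
move=> H; rewrite (mupG x n).2; apply: big1_seq => k _.
apply: big1_seq => i /andP [_]; rewrite mem_index_iota => /andP [i1 _].
by rewrite (negbTE (H i i1)).
Qed.

Lemma mupG_some x n m0 : (0 < m0)%N -> x ^+ m0 = -1 ->
  (forall r, (0 < r < m0)%N -> x ^+ r != -1) ->
  mup x (phi (Gn n)) = (n %/ (2 * m0))%N.
Proof.
move=> m0p xm H; rewrite (mupG x n).2.
under eq_bigr => k _ do rewrite (cnt_formula m0p xm H).
set b := fun k => (n %/ 2 ^ k %/ m0)%N.
transitivity (\sum_(1 <= k < (trunc_log 2 n).+1) (b k - b k.+1))%N.
  by apply: eq_bigr => k _; rewrite /b expnSr !divnMA.
rewrite tele; last first.
  move=> k; rewrite /b leq_div2r // leq_div2l // ?expn_gt0 // leq_pexp2l //.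
rewrite /b (@divn_small n (2 ^ (trunc_log 2 n).+1)); last exact: trunc_log_ltn.
by rewrite div0n subn0 expn1 -divnMA.
Qed.


Lemma mup_pow x m N : (0 < m)%N ->
  mup x (phi ((1 + 'X^m) ^+ N)) = (N * (x ^+ m == -1)%R)%N.
Proof.
move=> m1.
by rewrite /phi rmorphXn /= -/(phi _) phi_oneX mupX ?oneX_neq0 // mup1X.
Qed.

Lemma phi_pow_neq0 m N : phi ((1 + 'X^m) ^+ N) != 0.
Proof. by rewrite /phi rmorphXn /= -/(phi _) phi_oneX expf_neq0 // oneX_neq0. Qed.

Lemma Gn_monic n : Gn n \is monic.
Proof.
rewrite /Gn; apply: monic_prod => k _.
rewrite big_nat_cond; apply: monic_prod => i /andP [/andP [i1 _] _].
exact: oneX_monic.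
Qed.

Theorem theorem4p1 (n : nat) (f : {poly int}) : (1 <= n)%N ->
  (in_ideal (Gn n) f <->
   forall m : nat, (1 <= m)%N -> (m <= n %/ 2)%N ->
     in_ideal ((1 + 'X^m) ^+ (n %/ (2 * m))) f).
Proof.
move=> n1; split.
- move=> [h ->] m m1 mle.
  apply: lemA; first by apply: monic_exp; exact: oneX_monic.
  rewrite phiM; apply: dvdp_mull.
  apply: lemB => //; [exact: phi_pow_neq0 | exact: (mupG 0 n).1 | move=> x].
  rewrite mup_pow //.
  case: eqP => xm; last by rewrite muln0.
  have ex : exists i, (0 < i)%N && (x ^+ i == -1) by exists m; rewrite m1 xm eqxx.
  case: (ex_minnP ex) => m0 /andP [m0p /eqP xm0] minm.
  rewrite (mupG_some n m0p xm0) ?muln1.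
  + apply: leq_div2l; first by lia.
    have := minm m; rewrite m1 xm eqxx => /(_ isT); lia.
  + move=> r /andP [r0 rlt]; apply/negP => /eqP xr.
    have := minm r; rewrite r0 xr eqxx => /(_ isT); lia.
- move=> H.
  have [->|fn] := eqVneq f 0; first by exists 0; rewrite mul0r.
  apply: lemA; first exact: Gn_monic.
  have fn' : phi f != 0 by rewrite phi_eq0.
  apply: lemB => //; [exact: (mupG 0 n).1 | move=> x].
  case: (classic (exists i, (0 < i)%N && (x ^+ i == -1))) => [ex | nex].
  + case: (ex_minnP ex) => m0 /andP [m0p /eqP xm0] minm.
    have Hm : forall r, (0 < r < m0)%N -> x ^+ r != -1.
      move=> r /andP [r0 rlt]; apply/negP => /eqP xr.
      have := minm r; rewrite r0 xr eqxx => /(_ isT); lia.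
    rewrite (mupG_some n m0p xm0 Hm).
    case: (posnP (n %/ (2 * m0))) => [->//|Np].
    have m0le : (m0 <= n %/ 2)%N.
      rewrite divn_gt0 ?muln_gt0 // in Np.
      by have := leq_div2r 2 Np; rewrite mulKn.
    have [h Eh] := H m0 m0p m0le.
    have dv : phi ((1 + 'X^m0) ^+ (n %/ (2 * m0))) %| phi f by rewrite Eh phiM dvdp_mull.
    have := mup_mono x fn' dv; rewrite mup_pow // xm0 eqxx muln1 //.
  + rewrite mupG_none // => i i0; apply/negP => xi; apply: nex; by exists i; rewrite i0 xi.
Qed.
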